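(* Let $2\le t\le b\le M-b$. Let $\mathcal{D}$ be an $\mathbb{F}_q$-linear space of $b\times(M-b)$ matrices over $\mathbb{F}_q$ with $|\mathcal{D}|=q^{(M-b)t}$, containing an $\mathbb{F}_q$-linear subspace $\mathcal{A}$ with $|\mathcal{A}|=q^{M-b}$ in which every nonzero matrix has rank $b$. For $D\in\mathcal{D}$ let $V_D=\{(\overline{x},\overline{x}D):\overline{x}\in\mathbb{F}_q^b\}\subseteq\mathbb{F}_q^M$, and let $C$ be the array code whose columns are associated with the subspaces $V_D$, $D\in\mathcal{D}$, each exactly once. Then $C$ is a $[b\times q^{(M-b)t},\,M,\,d]$ array code with $$d=q^{(M-b)(t-1)}\left(q^{M-b}-q^{M-2b}\right);$$ its symbol locality is $r_{\mathrm s}=1$, its node locality satisfies $r_{\mathrm n}\ge2$, and its symbol availability is $t_{\mathrm s}=q^{(M-b)(t-1)}-1$.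
   Context: $q$ is a prime power. (In the paper, the subspaces $V_D$ are the blocks of a resolvable subspace transversal design of strength $t$, whose parallel classes are $\{V_D: D\in D_0+\mathcal{A}\}$ for the cosets $D_0+\mathcal{A}$ of $\mathcal{A}$ in $\mathcal{D}$.) A $[b\times n,M,d]$ array code over $\mathbb{F}_q$ is an $\mathbb{F}_q$-linear space of $b\times n$ matrices of dimension $M$; weight is the number of nonzero columns and $d$ is the minimum weight of a nonzero codeword. Given $b$-dimensional subspaces $V_1,\dots,V_n$ of $\mathbb{F}_q^M$, the array code whose columns are associated with them is obtained by placing a basis of $V_j$ as columns $(j-1)b+1,\dots,jb$ (the $j$th thick column) of an $M\times bn$ matrix $G$ and taking all arrays whose column-by-column flattening lies in the row space of $G$. A recovery set for codeword column $j$ is a set $S\subseteq[n]\setminus\{j\}$ with $V_j\subseteq\sum_{k\in S}V_k$; for symbol $(i,j)$ it is a set $S\subseteq[n]\setminus\{j\}$ such that the $i$th column of the $j$th thick column of $G$ lies in $\sum_{k\in S}V_k$. Node (resp. symbol) locality is the smallest $r$ such that every column (resp. symbol) has a recovery set of size at most $r$. Symbol availability $t_{\mathrm s}$ is the largest $t$ such that every symbol has $t$ pairwise-disjoint recovery sets each of size at most $r_{\mathrm s}$. *)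

(* Defs.v *)
From HB Require Import structures.
From mathcomp Require Import all_boot all_order all_algebra.
Set Implicit Arguments. Unset Strict Implicit. Unset Printing Implicit Defensive.
Import GRing.Theory.
Local Open Scope ring_scope.

Section ArrayCode.
Variables (F : fieldType) (M b n : nat).
(* Thick columns: Gs j : 'M_(M, b) whose columns form a basis of V_j (column
   space of Gs j, i.e. row space of (Gs j)^T inside 'rV_M). *)
Variable Gs : 'I_n -> 'M[F]_(M, b).

Definition gen_mx : 'M[F]_(M, \sum_(j < n) b) := \mxrow_(j < n) Gs j.

Definition unflatten (v : 'rV[F]_(\sum_(j < n) b)) : 'M[F]_(b, n) :=
  \matrix_(i < b, j < n) (submxrow v j) 0 i.

Definition array_code (X : 'M[F]_(b, n)) : Prop :=
  exists2 v, (v <= gen_mx)%MS & X = unflatten v.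

(* Dimension of the array code (= rank of G, as unflatten is injective). *)
Definition code_dim : nat := \rank gen_mx.

Definition weight (X : 'M[F]_(b, n)) : nat := #|[set j : 'I_n | col j X != 0]|.

Definition min_distance (d : nat) : Prop :=
  (exists2 X, array_code X & X != 0 /\ weight X = d) /\
  (forall X, array_code X -> X != 0 -> (d <= weight X)%N).

Definition Vsp (j : 'I_n) : 'M[F]_M := <<(Gs j)^T>>%MS.
Definition Vsum (S : {set 'I_n}) : 'M[F]_M := (\sum_(k in S) Vsp k)%MS.

Definition node_recovery_set (j : 'I_n) (S : {set 'I_n}) : Prop :=
  j \notin S /\ ((Gs j)^T <= Vsum S)%MS.

(* symbol (i,j): the i-th column of the j-th thick column of G *)
Definition symbol_recovery_set (i : 'I_b) (j : 'I_n) (S : {set 'I_n}) : Prop :=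
  j \notin S /\ (row i (Gs j)^T <= Vsum S)%MS.

Definition has_node_locality (r : nat) : Prop :=
  forall j, exists S, node_recovery_set j S /\ (#|S| <= r)%N.
Definition has_symbol_locality (r : nat) : Prop :=
  forall i j, exists S, symbol_recovery_set i j S /\ (#|S| <= r)%N.

Definition node_locality (r : nat) : Prop :=
  has_node_locality r /\ forall r', has_node_locality r' -> (r <= r')%N.
Definition symbol_locality (r : nat) : Prop :=
  has_symbol_locality r /\ forall r', has_symbol_locality r' -> (r <= r')%N.

Definition has_symbol_availability (r t : nat) : Prop :=
  forall i j, exists Ss : 'I_t -> {set 'I_n},
    (forall a, symbol_recovery_set i j (Ss a) /\ (#|Ss a| <= r)%N) /\
    (forall a c, a != c -> [disjoint Ss a & Ss c]).

Definition symbol_availability (t : nat) : Prop :=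
  exists2 r, symbol_locality r &
    has_symbol_availability r t /\
    forall t', has_symbol_availability r t' -> (t' <= t)%N.
End ArrayCode.

Definition is_lin_subspace (F : finFieldType) (b m : nat)
    (S : {set 'M[F]_(b, m)}) : Prop :=
  0 \in S /\ (forall x y, x \in S -> y \in S -> x + y \in S) /\
  (forall (a : F) x, x \in S -> a *: x \in S).

(* Basis of V_D = {(x, xD) : x in F^b} placed as columns: M x b matrix with
   columns (e_i, e_i D), M = b + m. *)
Definition VD_basis (F : fieldType) (b m : nat) (D : 'M[F]_(b, m))
  : 'M[F]_(b + m, b) := (row_mx 1%:M D)^T.

Definition code_cols (F : finFieldType) (b m : nat) (DD : {set 'M[F]_(b, m)})
  (k : 'I_#|DD|) : 'M[F]_(b + m, b) := VD_basis (enum_val k).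
Arguments code_cols {F b m} DD k.

(* Main.v *)
Require Import Defs.
From HB Require Import structures.
From mathcomp Require Import all_boot all_order all_algebra.
From mathcomp Require Import zify.
Set Implicit Arguments. Unset Strict Implicit. Unset Printing Implicit Defensive.
Import GRing.Theory.
Local Open Scope ring_scope.

Lemma lin_opp (F : finFieldType) b m (S : {set 'M[F]_(b, m)}) x :
  is_lin_subspace S -> x \in S -> - x \in S.
Proof. by case=> _ [_ hs] hx; rewrite -scaleN1r hs. Qed.

Lemma lin_sub (F : finFieldType) b m (S : {set 'M[F]_(b, m)}) x y :
  is_lin_subspace S -> x \in S -> y \in S -> x - y \in S.
Proof. move=> hS hx hy; case: (hS) => _ [ha _]; by rewrite ha // lin_opp. Qed.

Lemma rowmx_subP (F : fieldType) p b m (u : 'M[F]_(p, b + m)) (D : 'M_(b, m)) :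
  (u <= row_mx 1%:M D)%MS -> rsubmx u = lsubmx u *m D.
Proof. by case/submxP => w ->; rewrite mul_mx_row mulmx1 row_mxKl row_mxKr. Qed.

Lemma col_code (F : fieldType) b m (u : 'rV[F]_(b + m)) (D : 'M_(b, m)) :
  u *m (row_mx 1%:M D)^T = lsubmx u + rsubmx u *m D^T.
Proof.
by rewrite -[u]hsubmxK tr_row_mx trmx1 mul_row_col mulmx1 row_mxKl row_mxKr.
Qed.

Lemma L1 (F : finFieldType) b m (AA : {set 'M[F]_(b, m)}) :
  is_lin_subspace AA -> #|AA| = (#|F| ^ m)%N ->
  (forall X, X \in AA -> X != 0 -> \rank X = b) ->
  forall x : 'rV_b, x != 0 -> forall w : 'rV_m, exists2 D, D \in AA & x *m D = w.
Proof.
move=> hA cA rA x x0 w.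
have inj : {in AA &, injective (fun D => x *m D)}.
  move=> D1 D2 h1 h2 /eqP; rewrite -subr_eq0 -mulmxBr => /eqP e.
  apply/eqP; rewrite -subr_eq0; apply/negPn/negP => hne.
  have rf : row_free (D1 - D2) by rewrite /row_free rA // lin_sub.
  by move/eqP: e; rewrite mulmx_free_eq0 // (negbTE x0).
have : (fun D => x *m D) @: AA = [set: 'rV_m].
  apply/eqP; rewrite eqEcard subsetT /= card_in_imset // cardsT card_mx mul1n cA.
  by [].
move=> e; have : w \in [set: 'rV_m] by rewrite in_setT.
by rewrite -e => /imsetP [D hD ->]; exists D.
Qed.

Lemma card_ker (F : finFieldType) b m p (DD : {set 'M[F]_(b, m)})
  (phi : 'M[F]_(b, m) -> 'rV[F]_p) :
  is_lin_subspace DD -> (forall x y, phi (x + y) = phi x + phi y) ->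
  (forall y, exists2 D, D \in DD & phi D = y) ->
  (#|F| ^ p * #|[set E in DD | phi E == 0%R]| = #|DD|)%N.
Proof.
move=> hD hadd hsur.
have phi0 : phi 0 = 0 by apply: (@addrI _ (phi 0)); rewrite addr0 -hadd addr0.
have phiN x : phi (- x) = - phi x.
  by apply/eqP; rewrite -addr_eq0 addrC -hadd addrN phi0.
have phiB x y : phi (x - y) = phi x - phi y by rewrite hadd phiN.
pose s y := odflt 0 [pick D in DD | phi D == y].
have sP y : s y \in DD /\ phi (s y) = y.
  rewrite /s; case: pickP => [D /andP [h /eqP ->] //|].
  by case: (hsur y) => D h e /(_ D); rewrite h e eqxx.
set K := [set E in DD | phi E == 0%R].
pose g (pr : 'rV[F]_p * 'M[F]_(b, m)) := s pr.1 + pr.2.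
have ginj : {in setX [set: 'rV_p] K &, injective g}.
  move=> [y1 K1] [y2 K2]; rewrite /K !inE /= => /andP [_ /eqP k1].
  move=> /andP [_ /eqP k2]; rewrite /g /= => e.
  have ey : y1 = y2.
    by have := congr1 phi e; rewrite !hadd k1 k2 !addr0 (proj2 (sP y1)) (proj2 (sP y2)).
  by move: e; rewrite ey => /addrI ->.
have gim : g @: setX [set: 'rV_p] K = DD.
  apply/setP => D; apply/imsetP/idP.
    case=> [[y E]]; rewrite /K !inE /= => /andP [hE _] ->.
    by case: hD => _ [ha _]; rewrite /g ha //; case: (sP y).
  move=> hDin; exists (phi D, D - s (phi D)).
    rewrite /K !inE /= lin_sub //; last by case: (sP (phi D)).
    by rewrite phiB (proj2 (sP _)) subrr eqxx.
  by rewrite /g /= addrC subrK.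
by rewrite -gim card_in_imset // cardsX cardsT card_mx mul1n.
Qed.

Lemma orth (F : finFieldType) p (S : {set 'rV[F]_p}) (v0 : 'rV[F]_p) :
  0 \in S -> (forall x y, x \in S -> y \in S -> x + y \in S) ->
  (forall (a : F) x, x \in S -> a *: x \in S) -> v0 \notin S ->
  exists y : 'rV[F]_p, y != 0 /\ forall s, s \in S -> y *m s^T = 0.
Proof.
move=> S0 Sadd Sscal v0S.
pose A := \matrix_(i < #|S|) (enum_val i : 'rV[F]_p).
have subS v : (v <= A)%MS -> v \in S.
  case/submxP=> w ->; rewrite mulmx_sum_row.
  apply: (big_ind (fun x => x \in S)) => // i _.
  by apply: Sscal; rewrite rowK enum_valP.
have nf : ~~ row_full A.
  rewrite -sub1mx; apply/negP => h; apply/negP: v0S; apply/negPn.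
  by apply: subS; apply: submx_trans (submx1 v0) h.
have k0 : kermx A^T != 0.
  rewrite -mxrank_eq0 mxrank_ker mxrank_tr subn_eq0 -ltnNge.
  by rewrite ltn_neqAle nf rank_leq_col.
case/rowV0Pn: k0 => y /sub_kermxP hy y0; exists y; split => // s hs.
have -> : s = row (enum_rank_in hs s) A by rewrite rowK enum_rankK_in.
by rewrite rowE trmx_mul mulmxA hy mul0mx.
Qed.

Lemma L2 (F : finFieldType) b m (AA : {set 'M[F]_(b, m)}) :
  is_lin_subspace AA -> #|AA| = (#|F| ^ m)%N ->
  (forall X, X \in AA -> X != 0 -> \rank X = b) ->
  forall z : 'rV_m, z != 0 -> forall y : 'rV_b, exists2 D, D \in AA & z *m D^T = y.
Proof.
move=> hA cA rA z z0 y.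
set S := [set z *m D^T | D in AA].
have [yS|yS] := boolP (y \in S); first by case/imsetP: yS => D hD ->; exists D.
case: (hA) => A0 [Aadd Ascal].
have [y1 [y10 hy1]] : exists y1 : 'rV[F]_b, y1 != 0 /\ forall s, s \in S -> y1 *m s^T = 0.
  apply: (orth _ _ _ yS).
  - by apply/imsetP; exists 0 => //; rewrite trmx0 mulmx0.
  - move=> x1 x2 /imsetP [D1 h1 ->] /imsetP [D2 h2 ->]; apply/imsetP.
    by exists (D1 + D2); [apply: Aadd|rewrite linearD mulmxDr].
  - move=> a x /imsetP [D h ->]; apply/imsetP.
    by exists (a *: D); [apply: Ascal|rewrite linearZ scalemxAr].
case/rV0Pn: z0 => k zk.
case: (L1 hA cA rA y10 (delta_mx 0 k)) => D hD e.
have := hy1 (z *m D^T) (imset_f _ hD).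
rewrite trmx_mul trmxK mulmxA e => /matrixP /(_ 0 0).
by rewrite -rowE !mxE => /eqP; rewrite (negbTE zk).
Qed.

Section Code.
Lemma gcolT (F : finFieldType) b m (DD : {set 'M[F]_(b, m)}) j :
  (code_cols DD j)^T = row_mx 1%:M (enum_val j).
Proof. by rewrite /code_cols /VD_basis trmxK. Qed.

Lemma cw_col (F : finFieldType) b m (DD : {set 'M[F]_(b, m)}) (u : 'rV[F]_(b + m)) j :
  submxrow (u *m gen_mx (code_cols DD)) j = lsubmx u + rsubmx u *m (enum_val j)^T.
Proof. by rewrite /gen_mx mul_mxrow mxrowK /code_cols /VD_basis col_code. Qed.

Lemma unfl_col (F : fieldType) b n (v : 'rV[F]_(\sum_(j < n) b)) j :
  col j (unflatten v) = (submxrow v j)^T.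
Proof. by apply/matrixP => i k; rewrite !mxE (ord1 k). Qed.

Lemma row_rm1_neq0 (F : fieldType) b m (D : 'M[F]_(b, m)) i :
  row i (row_mx 1%:M D) != 0.
Proof.
rewrite row_row_mx; apply/negP => /eqP h.
have := congr1 lsubmx h; rewrite row_mxKl => /matrixP /(_ 0 i).
by rewrite !mxE eqxx /= => /eqP; rewrite oner_eq0.
Qed.
End Code.

Lemma Vsum0 (F : fieldType) M b n (Gs : 'I_n -> 'M[F]_(M, b)) :
  Vsum Gs set0 = 0.
Proof. by rewrite /Vsum big_set0. Qed.

Lemma Vsum1 (F : fieldType) M b n (Gs : 'I_n -> 'M[F]_(M, b)) k :
  Vsum Gs [set k] = (<<(Gs k)^T>>)%MS.
Proof. by rewrite /Vsum big_set1. Qed.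

Lemma SR1 (F : finFieldType) b m (DD : {set 'M[F]_(b, m)}) i j S :
  symbol_recovery_set (code_cols DD) i j S -> (#|S| <= 1)%N ->
  exists k, S = [set k] /\ k != j /\ row i (enum_val k) = row i (enum_val j).
Proof.
case=> jS hsub; rewrite leq_eqVlt ltnS leqn0 cards_eq0 => /orP [/cards1P [k Sk]|/eqP S0].
  exists k; split => //; split; first by apply/eqP => e; move: jS; rewrite Sk e set11.
  move: hsub; rewrite Sk Vsum1 genmxE !gcolT => /rowmx_subP.
  by rewrite row_row_mx row_mxKl row_mxKr -row_mul mul1mx.
by move: hsub; rewrite S0 Vsum0 submx0 gcolT (negbTE (row_rm1_neq0 _ _)).
Qed.

Lemma SR2 (F : finFieldType) b m (DD : {set 'M[F]_(b, m)}) i j k :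
  k != j -> row i (enum_val k) = row i (enum_val j) ->
  symbol_recovery_set (code_cols DD) i j [set k].
Proof.
move=> kj e; split; first by rewrite in_set1 eq_sym.
by rewrite Vsum1 genmxE !gcolT row_row_mx -e -row_row_mx row_sub.
Qed.

Lemma N1 (F : finFieldType) b m (DD : {set 'M[F]_(b, m)}) j S :
  (0 < b)%N -> node_recovery_set (code_cols DD) j S -> (2 <= #|S|)%N.
Proof.
move=> b0 [jS hsub]; rewrite ltnNge; apply/negP.
rewrite leq_eqVlt ltnS leqn0 cards_eq0 => /orP [/cards1P [k Sk]|/eqP S0].
  move: hsub; rewrite Sk Vsum1 genmxE !gcolT => /rowmx_subP.
  rewrite row_mxKl row_mxKr mul1mx => /enum_val_inj e.
  by move: jS; rewrite Sk e set11.
move: hsub; rewrite S0 Vsum0 submx0 gcolT => /eqP h.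
by have := row_rm1_neq0 (enum_val j) (Ordinal b0); rewrite h row0 eqxx.
Qed.

Lemma exp_cancel (q p N K : nat) : (0 < q)%N -> (p <= N)%N ->
  (q ^ p * K = q ^ N)%N -> K = (q ^ (N - p))%N.
Proof.
move=> q0 pN e; apply/eqP; rewrite -(@eqn_pmul2l (q ^ p)) ?expn_gt0 ?q0 //.
by rewrite e -expnD subnKC.
Qed.

Local Close Scope ring_scope.

Theorem mainTheorem14 (F : finFieldType) (b m t : nat)
    (DD AA : {set 'M[F]_(b, m)}) :
  (2 <= t)%N -> (t <= b)%N -> (b <= m)%N ->
  is_lin_subspace DD -> #|DD| = (#|F| ^ (m * t))%N ->
  AA \subset DD -> is_lin_subspace AA -> #|AA| = (#|F| ^ m)%N ->
  (forall X, X \in AA -> X != 0%R -> \rank X = b) ->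
  let q := #|F| in
  code_dim (code_cols DD) = (b + m)%N /\
  min_distance (code_cols DD) (q ^ (m * (t - 1)) * (q ^ m - q ^ (m - b)))%N /\
  symbol_locality (code_cols DD) 1 /\
  (forall r, has_node_locality (code_cols DD) r -> (2 <= r)%N) /\
  symbol_availability (code_cols DD) (q ^ (m * (t - 1)) - 1)%N.
Proof.
Local Open Scope ring_scope.
move=> t2 tb bm hD cD AD hA cA rA q.
have b0 : (0 < b)%N by apply: leq_trans tb; apply: leq_trans t2.
have m0 : (0 < m)%N by apply: leq_trans bm.
have q1 : (1 < q)%N by apply: card_finNzRing_gt1.
have q0 : (0 < q)%N by apply: ltnW.
have AsD := subsetP AD.
have D0 : (0 : 'M[F]_(b, m)) \in DD by case: hD.
have mtb : (b <= m * t)%N by apply: leq_trans bm _; rewrite leq_pmulr //; apply: leq_trans t2.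
have cKz : forall z : 'rV[F]_m, z != 0 ->
    #|[set E in DD | z *m E^T == 0]| = (q ^ (m * t - b))%N.
  move=> z z0; apply: exp_cancel => //; rewrite -cD.
  apply: (card_ker (phi := fun E => z *m E^T)) => //.
    by move=> x y; rewrite linearD mulmxDr.
  by move=> y; case: (L2 hA cA rA z0 y) => D hDA e; exists D => //; apply: AsD.
have cKr : forall i : 'I_b, #|[set E in DD | row i E == 0]| = (q ^ (m * (t - 1)))%N.
  move=> i; have -> : (m * (t - 1) = m * t - m)%N by rewrite mulnBr muln1.
  apply: exp_cancel => //; first by rewrite leq_pmulr //; apply: leq_trans t2.
  rewrite -cD; apply: (card_ker (phi := fun E => row i E)) => //.
    by move=> x y; rewrite linearD.
  have x0 : (delta_mx 0 i : 'rV[F]_b) != 0.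
    by apply/rV0Pn; exists i; rewrite mxE !eqxx oner_eq0.
  move=> y; case: (L1 hA cA rA x0 y) => D hDA e; exists D; first by apply: AsD.
  by rewrite rowE.
have cdim : code_dim (code_cols DD) = (b + m)%N.
  rewrite /code_dim; apply/eqP; change (row_free (gen_mx (code_cols DD))).
  apply: inj_row_free => u hu.
  have hc (j : 'I_#|DD|) : lsubmx u + rsubmx u *m (enum_val j)^T = 0 by rewrite -cw_col hu submxrow0.
  have y0 : lsubmx u = 0.
    by have := hc (enum_rank_in D0 0); rewrite enum_rankK_in // trmx0 mulmx0 addr0.
  have z0 : rsubmx u = 0.
    case: (eqVneq (rsubmx u) 0) => // zn.
    have x0 : (delta_mx 0 (Ordinal b0) : 'rV[F]_b) != 0.
      by apply/rV0Pn; exists (Ordinal b0); rewrite mxE !eqxx oner_eq0.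
    case: (L2 hA cA rA zn (delta_mx 0 (Ordinal b0))) => D hDA e.
    have := hc (enum_rank_in (AsD _ hDA) D); rewrite enum_rankK_in ?AsD // y0 add0r e.
    by move=> e0; move: x0; rewrite e0 eqxx.
  by rewrite -[u]hsubmxK y0 z0 row_mx0.
pose G := gen_mx (code_cols DD).
have wt : forall u : 'rV[F]_(b + m), weight (unflatten (u *m G)) =
    (q ^ (m * t) - #|[set j : 'I_#|DD| | (lsubmx u + rsubmx u *m (enum_val j)^T == 0)%R]|)%N.
  move=> u; rewrite /weight.
  have e : [set j | col j (unflatten (u *m G)) != 0] =
     ~: [set j : 'I_#|DD| | (lsubmx u + rsubmx u *m (enum_val j)^T == 0)%R].
    by apply/setP => j; rewrite !inE unfl_col trmx_eq0 /G cw_col.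
  rewrite e; have := cardsC [set j : 'I_#|DD| | (lsubmx u + rsubmx u *m (enum_val j)^T == 0)%R].
  rewrite card_ord => h; move: h cD; rewrite /q; lia.
have dE : (q ^ (m * (t - 1)) * (q ^ m - q ^ (m - b)) = q ^ (m * t) - q ^ (m * t - b))%N.
  have mt : (m <= m * t)%N by rewrite leq_pmulr //; apply: leq_trans t2.
  rewrite mulnBr -!expnD; congr (q ^ _ - q ^ _)%N; rewrite mulnBr muln1; lia.
have unfl0 : unflatten (0 : 'rV[F]_(\sum_(j < #|DD|) b)) = 0.
  by apply/matrixP => i j; rewrite !mxE.
have dpos : (0 < q ^ (m * t) - q ^ (m * t - b))%N.
  rewrite subn_gt0 ltn_exp2l // -subn_gt0 subKn // muln_gt0 m0 /=.
have md : min_distance (code_cols DD) (q ^ (m * (t - 1)) * (q ^ m - q ^ (m - b)))%N.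
  rewrite dE; split.
    pose z0 : 'rV[F]_m := delta_mx 0 (Ordinal m0).
    have z0n : z0 != 0 by apply/rV0Pn; exists (Ordinal m0); rewrite mxE !eqxx oner_eq0.
    pose u : 'rV[F]_(b + m) := row_mx 0 z0.
    have wu : weight (unflatten (u *m G)) = (q ^ (m * t) - q ^ (m * t - b))%N.
      rewrite wt /u row_mxKl row_mxKr -(cKz _ z0n); congr (_ - _)%N.
      rewrite -(@card_in_imset _ _ enum_val); last by move=> j k _ _; apply: enum_val_inj.
      apply: eq_card => E; rewrite !inE; apply/imsetP/idP.
        case=> j; rewrite inE add0r => h ->; by rewrite enum_valP.
      case/andP => hE h; exists (enum_rank_in hE E); last by rewrite enum_rankK_in.
      by rewrite inE add0r enum_rankK_in.
    exists (unflatten (u *m G)); first by exists (u *m G); [apply: submxMl|].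
    split => //; apply/negP => /eqP X0; move: wu dpos; rewrite X0 => <-.
    rewrite /weight (_ : [set j | col j 0 != 0] = set0) ?cards0 //.
    by apply/setP => j; rewrite !inE col0 eqxx.
  move=> X [v /submxP [u ->] ->] Xn; rewrite wt leq_sub2l //.
  set Z := [set j : 'I_#|DD| | _].
  have [z0|zn] := eqVneq (rsubmx u) 0.
    have y0 : lsubmx u != 0.
      apply/negP => /eqP y0; move: Xn; apply/negP/negPn/eqP.
      by rewrite -[u]hsubmxK y0 z0 row_mx0 mul0mx unfl0.
    rewrite (_ : Z = set0) ?cards0 //; apply/setP => j.
    by rewrite !inE z0 mul0mx addr0 (negbTE y0).
  rewrite -(cKz _ zn).
  have [Z0|[j0 hj0]] := set_0Vmem Z; first by rewrite Z0 cards0.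
  have e0 : rsubmx u *m (enum_val j0)^T = - lsubmx u.
    by move: hj0; rewrite inE addrC addr_eq0 => /eqP.
  rewrite -(@card_in_imset _ _ (fun j => enum_val j - enum_val j0)); last first.
    by move=> j k _ _ /addIr /enum_val_inj.
  apply: subset_leq_card; apply/subsetP => E /imsetP [j hj ->].
  rewrite inE lin_sub ?enum_valP //= linearB mulmxBr e0.
  by move: hj; rewrite inE addrC addr_eq0 => /eqP ->; rewrite subrr.
have i0 : 'I_b := Ordinal b0.
have j0 : 'I_#|DD| := enum_rank_in D0 0.
have sl : symbol_locality (code_cols DD) 1.
  split.
    move=> i j.
    have : (1 < #|[set E in DD | row i E == 0%R]|)%N.
      rewrite cKr -{1}(expn0 q) ltn_exp2l // muln_gt0 m0 /= subn_gt0 //.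
    case/card_gt1P => x [y [hx hy xy]].
    move: hx hy; rewrite !inE => /andP [hx rx] /andP [hy ry].
    have hE : enum_val j + (x - y) \in DD.
      by case: (hD) => _ [ha _]; rewrite ha ?enum_valP // lin_sub.
    exists [set enum_rank_in hE (enum_val j + (x - y))]; split; last by rewrite cards1.
    apply: SR2.
      apply/negP => /eqP e; have := congr1 enum_val e; rewrite enum_rankK_in //.
      move/(canRL (addKr _)); rewrite addNr => /eqP; rewrite subr_eq0.
      by rewrite (negbTE xy).
    by rewrite enum_rankK_in // linearD linearB /= (eqP rx) (eqP ry) subrr addr0.
  move=> r' h; case: (h i0 j0) => S [hs hS]; rewrite lt0n; apply/eqP => r0.
  move: hS; rewrite r0 leqn0 => hS0.
  have h1 : (#|S| <= 1)%N by rewrite (eqP hS0).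
  case: (SR1 hs h1) => k [Sk _].
  by move: hS0; rewrite Sk cards1.
split => //; split => //; split => //; split.
  move=> r h; case: (h j0) => S [hs hS]; exact: leq_trans (N1 b0 hs) hS.
pose C (i : 'I_b) (j : 'I_#|DD|) :=
  [set k | (k != j) && (row i (enum_val k) == row i (enum_val j))].
have cC : forall i j, #|C i j| = (q ^ (m * (t - 1)) - 1)%N.
  move=> i j.
  pose R := [set k : 'I_#|DD| | row i (enum_val k) == row i (enum_val j)].
  have cR : #|R| = (q ^ (m * (t - 1)))%N.
    rewrite -(cKr i) -(@card_in_imset _ _ (fun k => enum_val k - enum_val j)); last first.
      by move=> k l _ _ /addIr /enum_val_inj.
    apply: eq_card => E; rewrite !inE; apply/imsetP/idP.
      case=> k; rewrite inE => /eqP h ->.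
      by rewrite lin_sub ?enum_valP //= linearB /= h subrr.
    case/andP => hE /eqP h.
    have hE' : enum_val j + E \in DD by case: (hD) => _ [ha _]; rewrite ha ?enum_valP.
    exists (enum_rank_in hE' (enum_val j + E)); last by rewrite enum_rankK_in // addrC addKr.
    by rewrite inE enum_rankK_in // linearD /= h addr0.
  have -> : C i j = R :\ j by apply/setP => k; rewrite !inE.
  have := cardsD1 j R; rewrite cR {1}/R inE eqxx add1n => ->.
  by rewrite subn1.
exists 1 => //; split.
  move=> i j.
  exists (fun a : 'I_(q ^ (m * (t - 1)) - 1) => [set nth j (enum (C i j)) a]); split.
    move=> a; split; last by rewrite cards1.
    have : nth j (enum (C i j)) a \in C i j.
      by rewrite -mem_enum mem_nth // -cardE cC.
    by rewrite inE => /andP [h1 /eqP h2]; apply: SR2.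
  move=> a c ac; rewrite disjoints1 in_set1 nth_uniq ?enum_uniq // -?cardE ?cC //.
move=> t' h; case: (h i0 j0) => Ss [hS hdisj].
pose f a := odflt j0 [pick k | Ss a == [set k]].
have fP : forall a, Ss a = [set f a] /\ f a \in C i0 j0.
  move=> a; case: (hS a) => hs hs1; case: (SR1 hs hs1) => k [Sk [kj kr]].
  rewrite /f; case: pickP => [k' /eqP e|none]; last by have := none k; rewrite Sk eqxx.
  have ek : k' = k by apply: set1_inj; rewrite -e Sk.
  by rewrite e ek inE kj kr eqxx.
have finj : {in [set: 'I_t'] &, injective f}.
  move=> a c _ _ e; apply/eqP; apply/negPn/negP => ac.
  by have := hdisj a c ac; rewrite (proj1 (fP a)) (proj1 (fP c)) disjoints1 in_set1 e eqxx.
have sub : f @: [set: 'I_t'] \subset C i0 j0.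
  by apply/subsetP => k /imsetP [a _ ->]; exact: (proj2 (fP a)).
by have := subset_leq_card sub; rewrite card_in_imset // cardsT card_ord cC.
Qed.
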